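(* Consider the rectangular problem $$\max_{\alpha\in\mathbb{R}^{|\mathcal A|\times|\mathcal T|}}\ \sum_{i\in\mathcal A}\sum_{j\in\mathcal T} w_{ij}\alpha_{ij}\quad\text{s.t.}\quad \sum_{j\in\mathcal T}\alpha_{ij}\le 1\ (\forall i),\ \ \sum_i\alpha_{iP}=1,\ \ \sum_i\alpha_{ij}\le 1\ (\forall j\in\mathcal T\setminus\{P\}),\ \ 0\le\alpha_{ij}\le 1,$$ with $|\mathcal A|>|\mathcal T|$. Let $K=|\mathcal A|-|\mathcal T|$ and introduce $K$ secondary trajectory tasks $P'_1,\dots,P'_K$ with weights $w_{iP'_k}=(d(q_P,x_i)+\epsilon')^{-1}$ for all agents $i$ and all $k$, where $\epsilon'>0$. Consider the augmented square problem over $\tilde\alpha\in\mathbb{R}^{|\mathcal A|\times(|\mathcal T|+K)}$: $$\max\ \sum_{i}\sum_{j\in\mathcal T\cup\{P'_1,\dots,P'_K\}} w_{ij}\tilde\alpha_{ij}\quad\text{s.t. every row sum and every column sum of }\tilde\alpha\text{ equals }1,\ 0\le\tilde\alpha_{ij}\le1.$$ Then there exists $\epsilon'_0>0$ (depending on the agent positions, task locations and $\epsilon$) such that for every $\epsilon'>\epsilon'_0$, the restriction of any optimal solution $\tilde\alpha$ of the augmented problem to the columns indexed by $\mathcal T$ is an optimal solution of the rectangular problem; i.e., introducing the secondary trajectory tasks does not alter the assignment of the trajectory task $P$ and the online tasks.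
   Context: A team consists of a finite set $\mathcal A$ of agents; agent $i$ has position $x_i\in\mathbb{R}^m$. The task set $\mathcal T$ consists of one trajectory task $P$, with location $q_P\in\mathbb{R}^m$ (the next reference waypoint), and online tasks $O_j$ with locations $q_{O_j}\in\mathbb{R}^m$. $d(\cdot,\cdot)$ is Euclidean distance and $\epsilon>0$ is fixed. The weights are $w_{iP}=(d(q_P,x_i)+\epsilon)^{-1}$ and $w_{iO_j}=(d(q_{O_j},x_i)+\epsilon)^{-1}$; in particular $0<w_{ij}\le\epsilon^{-1}$. The variable $\alpha_{ij}$ is the splitting (assignment) coefficient of agent $i$ to task $j$. *)

(* Defs.v *)
From mathcomp Require Import all_boot all_order all_algebra.
From mathcomp Require Import reals.
Set Implicit Arguments. Unset Strict Implicit. Unset Printing Implicit Defensive.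
Import Order.TTheory GRing.Theory Num.Theory.
Local Open Scope ring_scope.

Section Defs.
Variable R : realType.

Definition edist (dim : nat) (a b : 'rV[R]_dim) : R :=
  Num.sqrt (\sum_(k < dim) (a 0 k - b 0 k) ^+ 2).

Definition weight (dim : nat) (e : R) (q x : 'rV[R]_dim) : R :=
  (edist q x + e)^-1.

Variables (n m : nat).
(* agents : 'I_n ; tasks : 'I_m.+1, task ord0 is the trajectory task P,
   tasks lift ord0 j are the online tasks O_j. *)

Definition rect_objective (w : 'I_n -> 'I_m.+1 -> R)
    (alpha : 'I_n -> 'I_m.+1 -> R) : R :=
  \sum_(i < n) \sum_(j < m.+1) w i j * alpha i j.

Definition rect_feasible (alpha : 'I_n -> 'I_m.+1 -> R) : Prop :=
  [/\ (forall i, \sum_(j < m.+1) alpha i j <= 1),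
      \sum_(i < n) alpha i ord0 = 1,
      (forall j : 'I_m.+1, j != ord0 -> \sum_(i < n) alpha i j <= 1) &
      (forall i j, 0 <= alpha i j <= 1)].

Definition rect_optimal w alpha : Prop :=
  rect_feasible alpha /\
  forall beta, rect_feasible beta -> rect_objective w beta <= rect_objective w alpha.

(* Augmented square problem: the columns are the original tasks ('I_m.+1)
   followed by K = n - (m+1) secondary trajectory tasks ('I_K); an augmented
   matrix is given as the pair (alpha, beta) of its two column blocks. *)
Definition Ksec : nat := (n - m.+1)%N.

Definition aug_objective (w : 'I_n -> 'I_m.+1 -> R) (w' : 'I_n -> R)
    (alpha : 'I_n -> 'I_m.+1 -> R) (beta : 'I_n -> 'I_Ksec -> R) : R :=
  \sum_(i < n) (\sum_(j < m.+1) w i j * alpha i j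
                + \sum_(k < Ksec) w' i * beta i k).

Definition aug_feasible (alpha : 'I_n -> 'I_m.+1 -> R)
    (beta : 'I_n -> 'I_Ksec -> R) : Prop :=
  [/\ (forall i, \sum_(j < m.+1) alpha i j + \sum_(k < Ksec) beta i k = 1),
      (forall j, \sum_(i < n) alpha i j = 1),
      (forall k, \sum_(i < n) beta i k = 1),
      (forall i j, 0 <= alpha i j <= 1) &
      (forall i k, 0 <= beta i k <= 1)].

Definition aug_optimal w w' alpha beta : Prop :=
  aug_feasible alpha beta /\
  forall alpha2 beta2, aug_feasible alpha2 beta2 ->
    aug_objective w w' alpha2 beta2 <= aug_objective w w' alpha beta.

End Defs.

(* Main.v *)
Require Import Defs.
From mathcomp Require Import all_boot all_order all_algebra.
From mathcomp Require Import reals.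
From mathcomp Require Import ring lra.
From Stdlib Require Import Classical.
Set Implicit Arguments. Unset Strict Implicit. Unset Printing Implicit Defensive.
Import Order.TTheory GRing.Theory Num.Theory.
Local Open Scope ring_scope.

Definition rs (R : realType) (n m : nat) (a : 'I_n -> 'I_m.+1 -> R) (i : 'I_n) : R :=
  \sum_(j < m.+1) a i j.

Definition inF (R : realType) (n m : nat) (a : 'I_n -> 'I_m.+1 -> R) : Prop :=
  [/\ (forall j, \sum_(i < n) a i j = 1), (forall i, rs a i <= 1) &
      (forall i j, 0 <= a i j)].

Definition Gobj (R : realType) (n m : nat) (w : 'I_n -> 'I_m.+1 -> R) (w' : 'I_n -> R)
  (a : 'I_n -> 'I_m.+1 -> R) : R :=
  rect_objective w a + \sum_(i < n) w' i * (1 - rs a i).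

Lemma fin_large (R : realType) (T : finType) (P : T -> R -> Prop) :
  (forall a e e', 0 < e -> e <= e' -> P a e -> P a e') ->
  (forall a, exists e, 0 < e /\ P a e) -> exists e, 0 < e /\ forall a, P a e.
Proof.
move=> mono H.
suff [e [e0 He]] : exists e, 0 < e /\ forall a, a \in enum T -> P a e.
  by exists e; split=> // a; apply: He; rewrite mem_enum.
elim: (enum T) => [|b s [e1 [e10 IH]]]; first by exists 1; split.
have [e2 [e20 H2]] := H b.
have [h|h] := leP e1 e2.
- exists e2; split=> // a; rewrite in_cons => /orP [/eqP ->//|/IH].
  by apply: mono.
- exists e1; split=> // a; rewrite in_cons => /orP [/eqP ->|/IH //].
  by apply: (mono _ e2) => //; apply: ltW.
Qed.

Lemma fin_small (R : realType) (T : finType) (P : T -> R -> Prop) :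
  (forall a t t', 0 < t' -> t' <= t -> P a t -> P a t') ->
  (forall a, exists t, 0 < t /\ P a t) -> exists t, 0 < t /\ forall a, P a t.
Proof.
move=> mono H.
suff [e [e0 He]] : exists e, 0 < e /\ forall a, a \in enum T -> P a e.
  by exists e; split=> // a; apply: He; rewrite mem_enum.
elim: (enum T) => [|b s [e1 [e10 IH]]]; first by exists 1; split.
have [e2 [e20 H2]] := H b.
have [h|h] := leP e1 e2.
- exists e1; split=> // a; rewrite in_cons => /orP [/eqP ->|/IH //].
  by apply: (mono _ e2).
- exists e2; split=> // a; rewrite in_cons => /orP [/eqP ->//|/IH].
  by apply: mono => //; apply: ltW.
Qed.

Lemma le_entry_sum (R : realType) (n : nat) (F : 'I_n -> R) i0 :
  (forall i, 0 <= F i) -> F i0 <= \sum_(i < n) F i.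
Proof.
move=> H; rewrite (bigD1 i0) //= lerDl; apply: sumr_ge0 => i _; exact: H.
Qed.

Lemma aug_obj_eq (R : realType) (n m : nat) w w' (a : 'I_n -> 'I_m.+1 -> R) b :
  aug_feasible a b -> aug_objective w w' a b = Gobj w w' a.
Proof.
case=> Hr _ _ _ _; rewrite /aug_objective /Gobj /rect_objective -big_split /=.
apply: eq_bigr => i _; congr (_ + _).
rewrite -mulr_sumr; congr (_ * _); rewrite /rs; have := Hr i; lra.
Qed.

Lemma complete (R : realType) (n m : nat) (a : 'I_n -> 'I_m.+1 -> R) :
  (m.+1 < n)%N -> inF a ->
  aug_feasible a (fun i (k : 'I_(Ksec n m)) => (1 - rs a i) / (Ksec n m)%:R).
Proof.
move=> hnm [Hc Hr Hp].
have K0 : 0 < (Ksec n m)%:R :> R by rewrite ltr0n /Ksec subn_gt0.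
have Hrs : forall i, 0 <= rs a i by move=> i; apply: sumr_ge0 => j _; exact: Hp.
split.
- move=> i; rewrite sumr_const card_ord -[_ *+ Ksec n m]mulr_natr divfK ?gt_eqF //.
  rewrite /rs; lra.
- done.
- move=> k; rewrite -mulr_suml big_split /= sumr_const card_ord sumrN.
  rewrite /rs exchange_big /= (eq_bigr (fun _ => 1)) // sumr_const card_ord.
  rewrite -natrB; last exact: ltnW.
  by rewrite mulfV ?gt_eqF.
- move=> i j; rewrite Hp /=; rewrite -(Hc j); apply: le_entry_sum => i'; exact: Hp.
- move=> i k; have := Hr i; have := Hrs i => h1 h2.
  have r0 : 0 <= 1 - rs a i by lra.
  rewrite divr_ge0 ?(ltW K0) //=.
  rewrite ler_pdivrMr // mul1r.
  have : 1 <= (Ksec n m)%:R :> R by rewrite ler1n /Ksec subn_gt0.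
  lra.
Qed.

Lemma aug_opt_G (R : realType) (n m : nat) w w' (a : 'I_n -> 'I_m.+1 -> R) b :
  (m.+1 < n)%N -> aug_optimal w w' a b ->
  inF a /\ forall g, inF g -> Gobj w w' g <= Gobj w w' a.
Proof.
move=> hnm [Hf Hopt]; have Hf' := Hf; case: Hf' => Hr Hc _ Hpa Hpb; split.
- split=> //; last by move=> i j; case/andP: (Hpa i j).
  move=> i; have := Hr i; rewrite /rs.
  have : 0 <= \sum_(k < Ksec n m) b i k.
    by apply: sumr_ge0 => k _; case/andP: (Hpb i k).
  lra.
- move=> g Hg; have Hc2 := complete hnm Hg.
  rewrite -(aug_obj_eq w w' Hc2) -(aug_obj_eq w w' Hf); exact: Hopt.
Qed.

Lemma inF_rect (R : realType) (n m : nat) (a : 'I_n -> 'I_m.+1 -> R) :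
  inF a -> rect_feasible a.
Proof.
case=> Hc Hr Hp; split=> //.
- by move=> j _; rewrite Hc.
- move=> i j; rewrite Hp /= -(Hc j); apply: le_entry_sum => i'; exact: Hp.
Qed.

Lemma W_comb (R : realType) (n m : nat) w (a d : 'I_n -> 'I_m.+1 -> R) (t : R) :
  rect_objective w (fun i j => a i j + t * d i j) =
  rect_objective w a + t * rect_objective w d.
Proof.
rewrite /rect_objective mulr_sumr -big_split; apply: eq_bigr => i _.
rewrite mulr_sumr -big_split; apply: eq_bigr => j _ /=; ring.
Qed.

Lemma W_sub (R : realType) (n m : nat) w (a d : 'I_n -> 'I_m.+1 -> R) :
  rect_objective w (fun i j => a i j - d i j) =
  rect_objective w a - rect_objective w d.
Proof.
rewrite /rect_objective -sumrB; apply: eq_bigr => i _.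
rewrite -sumrB; apply: eq_bigr => j _ /=; ring.
Qed.

Lemma rs_comb (R : realType) (n m : nat) (a d : 'I_n -> 'I_m.+1 -> R) (t : R) i :
  rs (fun i j => a i j + t * d i j) i = rs a i + t * rs d i.
Proof. by rewrite /rs mulr_sumr -big_split. Qed.

Lemma fill (R : realType) (n m : nat) (w : 'I_n -> 'I_m.+1 -> R) g :
  (m.+1 < n)%N -> (forall i j, 0 < w i j) -> rect_feasible g ->
  exists g', inF g' /\ rect_objective w g <= rect_objective w g'.
Proof.
move=> hnm Hw [Hr H0 Hc Hp].
pose r i := 1 - rs g i.
pose c j := 1 - \sum_(i < n) g i j.
pose Rs := \sum_(i < n) r i.
have c0 : forall j, 0 <= c j.
  move=> j; rewrite /c; case: (eqVneq j ord0) => [->|hj]; first by rewrite H0 subrr.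
  have := Hc j hj; lra.
have r0 : forall i, 0 <= r i by move=> i; have := Hr i; rewrite /r /rs; lra.
have Htot : \sum_(i < n) rs g i = \sum_(j < m.+1) \sum_(i < n) g i j.
  by rewrite /rs exchange_big.
have Hcs : \sum_(j < m.+1) \sum_(i < n) g i j <= (m.+1)%:R.
  have : \sum_(j < m.+1) \sum_(i < n) g i j <= \sum_(j < m.+1) (1 : R).
    apply: ler_sum => j _.
    case: (eqVneq j ord0) => [->|hj]; first by rewrite H0.
    exact: Hc.
  by rewrite sumr_const card_ord.
have HRs : Rs = n%:R - \sum_(i < n) rs g i.
  by rewrite /Rs /r sumrB sumr_const card_ord.
have Hsc : \sum_(j < m.+1) c j = (m.+1)%:R - \sum_(j < m.+1) \sum_(i < n) g i j.
  by rewrite /c sumrB sumr_const card_ord.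
have hmn : (m.+1)%:R < n%:R :> R by rewrite ltr_nat.
have Rs0 : 0 < Rs by rewrite HRs Htot; lra.
have ScR : \sum_(j < m.+1) c j <= Rs by rewrite Hsc HRs Htot; lra.
exists (fun i j => g i j + r i / Rs * c j); split; first split.
- move=> j; rewrite big_split /= -mulr_suml -mulr_suml -/Rs mulfV ?gt_eqF //.
  rewrite mul1r /c; lra.
- move=> i; rewrite /rs big_split /= -mulr_sumr.
  have h1 : 0 <= r i / Rs by rewrite divr_ge0 // ltW.
  have h2 : r i / Rs * Rs = r i by rewrite divfK ?gt_eqF.
  have h3 : r i / Rs * \sum_(j < m.+1) c j <= r i / Rs * Rs by rewrite ler_wpM2l.
  move: h3; rewrite h2 /r /rs; lra.
- move=> i j; apply: addr_ge0; first by case/andP: (Hp i j).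
  by apply: mulr_ge0 => //; apply: divr_ge0 => //; apply: ltW.
- rewrite /rect_objective -subr_ge0 -sumrB sumr_ge0 // => i _.
  rewrite -sumrB sumr_ge0 // => j _.
  rewrite mulrDr addrC addKr; apply: mulr_ge0; first exact: ltW.
  by apply: mulr_ge0 => //; apply: divr_ge0 => //; apply: ltW.
Qed.

Definition inD (R : realType) (n m : nat) (A : {set 'I_n * 'I_m.+1} * {set 'I_n})
  (d : 'I_n -> 'I_m.+1 -> R) : Prop :=
  [/\ (forall j, \sum_(i < n) d i j = 0),
      (forall i j, (i, j) \in A.1 -> 0 <= d i j) &
      (forall i, i \in A.2 -> rs d i <= 0)].

Definition act (R : realType) (n m : nat) (a : 'I_n -> 'I_m.+1 -> R) :
  {set 'I_n * 'I_m.+1} * {set 'I_n} :=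
  ([set p | a p.1 p.2 == 0], [set i | rs a i == 1]).

Definition Sd (R : realType) (n m : nat) (d : 'I_n -> 'I_m.+1 -> R) : R :=
  \sum_(i < n) `|rs d i|.

Lemma small_pos (R : realType) (a d : R) :
  0 < a -> exists t, 0 < t /\ forall t', 0 <= t' <= t -> 0 <= a + t' * d.
Proof.
move=> a0.
have u0 : 0 <= `|d| by [].
have hd : - `|d| <= d by rewrite -normrN; have := ler_norm (- d); lra.
move: (`|d|) u0 hd => u u0 hd.
exists (a / (u + 1)).
have ht : a / (u + 1) * (u + 1) = a by rewrite divfK // gt_eqF //; lra.
split; first by rewrite divr_gt0 //; lra.
move=> t' /andP [h1 h2]; move: ht h2.
move: (a / (u + 1)) => t ht h2.
have tp : 0 <= t by lra.
have e1 : 0 <= t' * d + t' * u.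
  by rewrite -mulrDr; apply: mulr_ge0; lra.
have e2 : t' * u <= t * u by rewrite ler_wpM2r.
have e3 : t * u <= a by rewrite -ht mulrDr mulr1 lerDl.
lra.
Qed.

Lemma step (R : realType) (n m : nat) (a d : 'I_n -> 'I_m.+1 -> R) :
  inF a -> inD (act a) d -> exists t, 0 < t /\ inF (fun i j => a i j + t * d i j).
Proof.
move=> [Hc Hr Hp] [Dc Dz Dt].
pose cond (x : ('I_n * 'I_m.+1) + 'I_n) (t : R) : Prop :=
  match x with
  | inl p => 0 <= a p.1 p.2 + t * d p.1 p.2
  | inr i => 0 <= (1 - rs a i) + t * (- rs d i)
  end.
pose P (x : ('I_n * 'I_m.+1) + 'I_n) (t : R) := forall t', 0 <= t' <= t -> cond x t'.
have mono : forall x t t', 0 < t' -> t' <= t -> P x t -> P x t'.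
  move=> x t t' t0' h H t'' /andP [h1 h2]; apply: H; rewrite h1 /=.
  exact: le_trans h2 h.
have ex : forall x, exists t, 0 < t /\ P x t.
  case=> [[i j]|i]; rewrite /P /cond /=.
  + case: (eqVneq (a i j) 0) => [h0|hne].
      exists 1; split=> // t' /andP [h1 _]; rewrite h0 add0r.
      apply: mulr_ge0 => //; apply: Dz; by rewrite inE /= h0.
    have ha : 0 < a i j by rewrite lt_def hne Hp.
    exact: small_pos.
  + case: (eqVneq (rs a i) 1) => [h0|hne].
      exists 1; split=> // t' /andP [h1 _]; rewrite h0 subrr add0r.
      apply: mulr_ge0 => //; rewrite oppr_ge0; apply: Dt; by rewrite inE /= h0.
    have ha : 0 < 1 - rs a i.
      have := Hr i; rewrite le_eqVlt (negbTE hne) /=; lra.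
    exact: small_pos.
have [t [t0 Ht]] := fin_small mono ex.
exists t; split=> //; split.
- move=> j; rewrite big_split /= -mulr_sumr Dc Hc; lra.
- move=> i; rewrite rs_comb; have := Ht (inr i) t; rewrite /cond.
  rewrite le_refl ltW //= => /(_ isT); lra.
- move=> i j; have := Ht (inl (i, j)) t; rewrite /cond le_refl ltW //=.
  by move=> /(_ isT).
Qed.

Lemma core (R : realType) (n m : nat) (w : 'I_n -> 'I_m.+1 -> R) :
  exists e, 0 < e /\ forall (w' : 'I_n -> R) (c : R), 0 <= c -> c * e < 1 ->
    (forall i, 0 <= w' i <= c) ->
    forall a, inF a -> (forall g, inF g -> Gobj w w' g <= Gobj w w' a) ->
    forall g, inF g -> rect_objective w g <= rect_objective w a.
Proof.
pose P (A : {set 'I_n * 'I_m.+1} * {set 'I_n}) (e : R) :=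
  forall dd, inD A dd -> 0 < rect_objective w dd ->
  exists d, [/\ inD A d, 0 < rect_objective w d & Sd d <= e * rect_objective w d].
have mono : forall A e e', 0 < e -> e <= e' -> P A e -> P A e'.
  move=> A e e' e0 h H dd h1 h2; have [d [d1 d2 d3]] := H dd h1 h2.
  exists d; split=> //; apply: (le_trans d3); rewrite ler_wpM2r // ltW //.
have Sd0 : forall d : 'I_n -> 'I_m.+1 -> R, 0 <= Sd d by move=> d; rewrite /Sd sumr_ge0.
have ex : forall A, exists e, 0 < e /\ P A e.
  move=> A; case: (classic (exists dd, inD A dd /\ 0 < rect_objective w dd)).
  - move=> [dd [h1 h2]]; exists (Sd dd / rect_objective w dd + 1); split.
      have := Sd0 dd; have : 0 <= Sd dd / rect_objective w dd.
        by rewrite divr_ge0 // ltW.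
      lra.
    move=> _ _ _; exists dd; split=> //.
    rewrite mulrDl divfK ?gt_eqF //; lra.
  - move=> hn; exists 1; split=> // dd h1 h2; exfalso; apply: hn; exists dd; done.
have [e [e0 He]] := fin_large mono ex.
exists e; split=> // w' c c0 ce hw a Ha Hopt g Hg.
rewrite leNgt; apply/negP => hlt.
pose d0 := fun i j => g i j - a i j.
case: (Ha) => Hac Har Hap; case: (Hg) => Hgc Hgr Hgp.
have hd0 : inD (act a) d0.
  split.
  - by move=> j; rewrite /d0 sumrB Hac Hgc subrr.
  - move=> i j; rewrite inE /= => /eqP h; rewrite /d0 h subr0; exact: Hgp.
  - move=> i; rewrite inE /= => /eqP h; rewrite /rs /d0 sumrB -/(rs g i) -/(rs a i) h.
    have := Hgr i; lra.
have W0 : 0 < rect_objective w d0 by rewrite /d0 W_sub subr_gt0.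
have [d [hd Wd Sdd]] := He _ _ hd0 W0.
have [t [t0 Ht]] := step Ha hd.
have := Hopt _ Ht; rewrite /Gobj W_comb.
have -> : \sum_(i < n) w' i * (1 - rs (fun i j => a i j + t * d i j) i) =
          \sum_(i < n) w' i * (1 - rs a i) - t * \sum_(i < n) w' i * rs d i.
  rewrite mulr_sumr -sumrB; apply: eq_bigr => i _; rewrite rs_comb; ring.
move=> h.
have h1 : rect_objective w d <= \sum_(i < n) w' i * rs d i.
  have : t * (rect_objective w d - \sum_(i < n) w' i * rs d i) <= 0 by lra.
  by rewrite pmulr_rle0 // subr_le0.
have h2 : \sum_(i < n) w' i * rs d i <= c * Sd d.
  rewrite /Sd mulr_sumr; apply: ler_sum => i _.
  have := hw i; move=> /andP [w0 wc].
  have x1 := ler_norm (rs d i).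
  have x2 : 0 <= `|rs d i| by [].
  have y1 : w' i * rs d i <= w' i * `|rs d i| by rewrite ler_wpM2l.
  have y2 : w' i * `|rs d i| <= c * `|rs d i| by rewrite ler_wpM2r.
  lra.
have h3 : c * Sd d <= c * (e * rect_objective w d) by rewrite ler_wpM2l.
have h4 : c * (e * rect_objective w d) < rect_objective w d.
  by rewrite mulrA gtr_pMl.
lra.
Qed.

Theorem mainTheorem3 (R : realType) (dim n m : nat)
    (x : 'I_n -> 'rV[R]_dim) (q : 'I_m.+1 -> 'rV[R]_dim) (eps : R) :
  0 < eps -> (m.+1 < n)%N ->
  exists eps0 : R, 0 < eps0 /\
    forall eps' : R, eps0 < eps' ->
    forall (alpha : 'I_n -> 'I_m.+1 -> R) (beta : 'I_n -> 'I_(Ksec n m) -> R),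
      aug_optimal (fun i j => weight eps (q j) (x i))
                  (fun i => weight eps' (q ord0) (x i)) alpha beta ->
      rect_optimal (fun i j => weight eps (q j) (x i)) alpha.
Proof.
move=> eps0 hnm.
have [e [e0 He]] := core (fun i j => weight eps (q j) (x i)).
exists e; split=> // eps' he alpha beta Hopt.
have ep0 : 0 < eps' by apply: lt_trans he.
have [Ha HG] := aug_opt_G hnm Hopt.
have Hw : forall i j, 0 < weight eps (q j) (x i).
  move=> i j; rewrite /weight invr_gt0 /edist.
  have := sqrtr_ge0 (\sum_(k < dim) (q j 0 k - x i 0 k) ^+ 2); lra.
split; first exact: inF_rect.
move=> g Hg.
have [g' [Hg' Hle]] := fill hnm Hw Hg.
apply: (le_trans Hle); apply: (He (fun i => weight eps' (q ord0) (x i)) (eps'^-1)) => //.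
- by rewrite invr_ge0 ltW.
- by rewrite mulrC ltr_pdivrMr // mul1r.
- move=> i; rewrite /weight.
  have hs := sqrtr_ge0 (\sum_(k < dim) (q ord0 0 k - x i 0 k) ^+ 2).
  rewrite /edist invr_ge0 lef_pV2 ?posrE; try lra.
Qed.
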